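(* Let $\Gamma$ be a connected $3$-plane drawing. Then \[ 2|E_2|+4|E_3| \;\ge\; 3N(A_3)+N(B_4)+4N(A_4)+2N(B_5)+5N(A_5)+\tau(B_4,L)+\tau(B_5,L)+\tau(A_3,L)+\tau(A_5,L). \]
   Context: Drawings are on the sphere: vertices are distinct points, edges (of a graph possibly with parallel edges, no loops) are Jordan arcs; any two edges share finitely many points, each a common endpoint or a proper crossing; no three edges cross at one point; no edge crosses itself; adjacent edges do not cross. A drawing is $3$-plane if every edge is crossed at most three times. For $i\in\{0,1,2,3\}$, $E_i$ is the set of edges with exactly $i$ crossings. An edge with $i$ crossings is split into $i+1$ edge-segments; an edge-segment is inner if both its endpoints are crossings and outer otherwise. The planarization replaces each crossing by a degree-$4$ vertex; the drawing is connected if its planarization is connected. Cells are the components of the sphere minus all vertices and edges; the boundary of a cell is a cyclic sequence alternating between edge-segments and vertices/crossings. The size of a cell is the number of vertex incidences plus edge-segment incidences along its boundary (crossings not counted). Cell types: $A_3$: three crossings and three inner edge-segments, no vertex. $A_4$: four crossings and four inner edge-segments. $B_4$: boundary $v$, outer segment, crossing, inner segment, crossing, outer segment. $B_5$: boundary $v$, outer segment, crossing, inner segment, crossing, inner segment, crossing, outer segment. $A_5$: five crossings and five inner segments. $L$: any cell of size at least $6$. $N(T)$ is the number of cells of type $T$. Trails: a trail is a sequence $(c_1,\dots,c_\ell)$, $\ell\ge 2$, of cells such that (1) neither $c_1$ nor $c_\ell$ is of type $A_4$; (2) consecutive cells share an inner edge-segment; (3) each of $c_2,\dots,c_{\ell-1}$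 is an $A_4$-cell whose two edge-segments shared with its neighbours are opposite on its boundary. A trail and its reversal are the same trail. $\tau(T,T')$ is the number of trails whose end cells are of types $T$ and $T'$. *)

(* Defs.v *)
(* Combinatorial encoding of a drawing on the sphere via its
   planarization, represented as a combinatorial map on a finite type of darts. *)
From mathcomp Require Import all_boot.

Set Implicit Arguments.
Unset Strict Implicit.
Unset Printing Implicit Defensive.

Section Drawing.

(* Each edge-segment of the planarization consists
   of two darts exchanged by [alpha]; [sigma] is the rotation of darts around
   their tail point (a vertex of the drawing or a crossing); [cr d] says that
   the tail point of [d] is a crossing (otherwise it is a vertex of the graph). *)
Variables (D : finType) (alpha sigma : D -> D) (cr : pred D).

(* face permutation: the cells of the drawing are the orbits of [phi];
   along a cell boundary, dart d contributes the edge-segment of d and the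
   corner at the tail of [phi d] *)
Definition phi (d : D) : D := sigma (alpha d).

(* straight continuation through the crossing at the head of d *)
Definition nxt (d : D) : D := sigma (sigma (alpha d)).

(* number of crossings of the edge whose first segment is d (d at a vertex):
   least k such that the head of the k-th segment is a vertex *)
Definition crn (d : D) : nat :=
  find (fun k => ~~ cr (alpha (iter k nxt d))) (iota 0 #|D|.+1).

(* the edge of the drawing starting with dart d, as the set of darts of its
   segments (this set is the same from both ends) *)
Definition edgeDarts (d : D) : {set D} :=
  [set x | [exists k : 'I_(crn d).+1,
              (x == iter k nxt d) || (x == alpha (iter k nxt d))]].

Definition Eset (i : nat) : {set {set D}} :=
  [set edgeDarts d | d in [pred d | ~~ cr d & crn d == i]].

Definition samept (x y : D) : bool := fconnect sigma x y.

Definition norb (f : D -> D) : nat := fcard f (mem (@predT D)).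

Definition is_conn_3plane_drawing : Prop :=
  (forall d, alpha (alpha d) = d /\ alpha d != d) /\
  injective sigma /\
  (forall d, cr (sigma d) = cr d) /\
  (forall d, cr d -> fingraph.order sigma d = 4) /\
  (forall x y, connect (fun a b => (b == alpha a) || (b == sigma a)) x y) /\
  (* embedded on the sphere: Euler's formula V - E + F = 2 *)
  norb sigma + norb phi = norb alpha + 2 /\
  (* every edge-segment lies on an edge between two vertices *)
  (forall d, exists k, ~~ cr (alpha (iter k nxt d))) /\
  (forall d, ~~ cr d -> crn d <= 3) /\
  (* no loops *)
  (forall d, ~~ cr d -> ~~ samept d (alpha (iter (crn d) nxt d))) /\
  (* no edge crosses itself (passes twice through the same crossing) *)
  (forall d i j, ~~ cr d -> 1 <= i -> i < j -> j <= crn d ->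
      ~~ samept (iter i nxt d) (iter j nxt d)) /\
  (* adjacent edges do not cross *)
  (forall d d' i j, ~~ cr d -> ~~ cr d' -> samept d d' ->
      edgeDarts d != edgeDarts d' ->
      1 <= i -> i <= crn d -> 1 <= j -> j <= crn d' ->
      ~~ samept (iter i nxt d) (iter j nxt d')).

Definition faceOf (d : D) : {set D} := [set y | fconnect phi d y].
Definition Faces : {set {set D}} := [set faceOf d | d : D].

Definition vcorners (f : {set D}) : nat := #|[set y in f | ~~ cr y]|.
(* size = vertex incidences + edge-segment incidences *)
Definition fsize (f : {set D}) : nat := #|f| + vcorners f.

Definition isA3 (f : {set D}) : bool := (#|f| == 3) && (vcorners f == 0).
Definition isA4 (f : {set D}) : bool := (#|f| == 4) && (vcorners f == 0).
Definition isA5 (f : {set D}) : bool := (#|f| == 5) && (vcorners f == 0).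
Definition isB4 (f : {set D}) : bool := (#|f| == 3) && (vcorners f == 1).
Definition isB5 (f : {set D}) : bool := (#|f| == 4) && (vcorners f == 1).
Definition isL  (f : {set D}) : bool := 6 <= fsize f.

Definition Ncells (P : {set D} -> bool) : nat := #|[set f in Faces | P f]|.

Definition inner (d : D) : bool := cr d && cr (alpha d).

(* A trail (c_1,...,c_l) is recorded by the oriented inner segments
   s_1,...,s_{l-1} it crosses: c_1 = faceOf s_1, c_{j+1} = faceOf (alpha s_j);
   in a middle A4-cell the exit segment is the opposite one on its boundary. *)
Definition isTrail (s : seq D) : bool :=
  if s is d :: p then
    [&& ~~ isA4 (faceOf d), ~~ isA4 (faceOf (alpha (last d p))), all inner s &
        path (fun x y => isA4 (faceOf (alpha x)) && (y == phi (phi (alpha x)))) d p]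
  else false.

Definition tstart (s : seq D) : {set D} :=
  if s is d :: _ then faceOf d else set0.
Definition tend (s : seq D) : {set D} :=
  if s is d :: p then faceOf (alpha (last d p)) else set0.

(* a trail and its reversal are the same trail *)
Definition trev n (t : n.-tuple D) : n.-tuple D := rev_tuple (map_tuple alpha t).

(* tau(T,T'): number of (unordered) trails with end cells of types T and T'.
   Trails cross pairwise distinct darts, hence have at most #|D| segments. *)
Definition tau (P Q : {set D} -> bool) : nat :=
  \sum_(n < #|D|.+1)
     #|[set [set t; trev t] | t in
          [pred t : n.-tuple D | isTrail t &&
             ((P (tstart t) && Q (tend t)) || (Q (tstart t) && P (tend t)))]]|.

End Drawing.

(* Main.v *)
Require Import Defs.
From mathcomp Require Import all_boot zify.
Set Implicit Arguments. Unset Strict Implicit. Unset Printing Implicit Defensive.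
Lemma cardE_sum (T : finType) (A : {set T}) : #|A| = \sum_x (x \in A : nat).
Proof. by rewrite -sum1_card big_mkcond; apply: eq_bigr => x _; case: (x \in A). Qed.

Lemma union_bound (T J : finType) (I : {set T}) (P : pred J) (B : J -> {set T}) :
  (forall x, x \in I -> exists2 j, P j & x \in B j) ->
  #|I| <= \sum_(j | P j) #|B j|.
Proof.
move=> H; rewrite cardE_sum.
under [X in _ <= X]eq_bigr do rewrite cardE_sum.
rewrite [X in _ <= X]exchange_big /=; apply: leq_sum => x _.
case xI: (x \in I) => //; have [j Pj xB] := H x xI.
by rewrite (bigD1 j) //= xB.
Qed.

Lemma disj_sum (I T : finType) (A : I -> {set T}) (Z : {set T}) :
  (forall i, A i \subset Z) -> (forall i j x, x \in A i -> x \in A j -> i = j) ->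
  \sum_i #|A i| <= #|Z|.
Proof.
move=> sub dis; rewrite cardE_sum.
under eq_bigr do rewrite cardE_sum.
rewrite exchange_big /=; apply: leq_sum => x _.
case: (pickP (fun i => x \in A i)) => [i xi|none].
  rewrite (bigD1 i) //= xi big1 ?addn0.
    by rewrite (subsetP (sub i)).
  by move=> j /negbTE ji; case xj: (x \in A j) => //; rewrite -(dis _ _ _ xi xj) eqxx in ji.
by rewrite big1 // => i _; rewrite none.
Qed.

Lemma card_imset_le_imset (T U V : finType) (S : {pred T}) (F : T -> U) (g : T -> V) :
  {in S &, forall x y, g x = g y -> F x = F y} -> #|F @: S| <= #|g @: S|.
Proof.
move=> H.
case: (pickP (mem S)) => [t0 t0S|none]; last first.
  suff -> : F @: S = set0 by rewrite cards0.
  by apply/setP => u; rewrite inE; apply/imsetP => -[t tS _]; by move: (none t); rewrite /= tS.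
pose h y := odflt t0 [pick t in S | g t == y].
apply: (leq_trans _ (leq_imset_card (fun y => F (h y)) _)).
apply: subset_leq_card; apply/subsetP => u /imsetP[t tS ->].
apply/imsetP; exists (g t); first by apply/imsetP; exists t.
rewrite /h; case: pickP => [t' /andP[t'S /eqP e]|/(_ t)] /=; last by rewrite tS eqxx.
by apply: H.
Qed.

Section Main.
Variables (D : finType) (alpha sigma : D -> D) (cr : pred D).
Hypothesis Hal : forall d, alpha (alpha d) = d.
Hypothesis Hsinj : injective sigma.
Hypothesis Hcr : forall d, cr (sigma d) = cr d.
Hypothesis Hord : forall d, cr d -> order sigma d = 4.
Hypothesis Hend : forall d, exists k, ~~ cr (alpha (iter k (nxt alpha sigma) d)).
Hypothesis H3 : forall d, ~~ cr d -> crn alpha sigma cr d <= 3.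

Local Notation ph := (phi alpha sigma).
Local Notation nx := (nxt alpha sigma).
Local Notation cn := (crn alpha sigma cr).
Local Notation fc := (faceOf alpha sigma).
Local Notation inn := (inner alpha cr).

Lemma ph_inj : injective ph.
Proof. by move=> x y /Hsinj /(can_inj Hal). Qed.

Lemma face_sym e y : y \in fc e -> fc y = fc e.
Proof.
rewrite inE => ey; apply/setP => z; rewrite !inE.
apply/idP/idP => H.
  exact: connect_trans ey H.
by apply: connect_trans H; rewrite fconnect_sym //; apply: ph_inj.
Qed.

Lemma mem_face e : e \in fc e.
Proof. by rewrite inE connect0. Qed.

Lemma face_ph e y : y \in fc e -> ph y \in fc e.
Proof. by rewrite !inE => ey; apply: connect_trans ey (fconnect1 _ _). Qed.

Lemma cr_ph d : cr (ph d) = cr (alpha d).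
Proof. by rewrite /phi Hcr. Qed.

Lemma face_count e :
  #|fc e| <= #|[set d in fc e | inn d]| + 2 * vcorners cr (fc e).
Proof.
set f := fc e.
set N := [set y in f | ~~ cr y].
set M := [set y in f | ~~ cr (ph y)].
have MN : #|M| <= #|N|.
  rewrite -(card_imset _ ph_inj); apply: subset_leq_card; apply/subsetP => z.
  case/imsetP => y; rewrite inE => /andP[yf ny] ->.
  by rewrite inE ny (face_ph yf).
have sub : f \subset [set d in f | inn d] :|: (N :|: M).
  apply/subsetP => z zf; rewrite !inE; move: zf; rewrite inE => -> /=; rewrite /inner -cr_ph.
  by case: (cr z); case: (cr (ph z)).
apply: (leq_trans (subset_leq_card sub)).
apply: (leq_trans (leq_card_setU [set d in f | inn d] (N :|: M)).1).
rewrite leq_add2l /vcorners -/f -/N.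
apply: (leq_trans (leq_card_setU N M).1).
by rewrite mul2n -addnn leq_add2l.
Qed.

Lemma iter4 x : iter 4 sigma x = sigma (sigma (sigma (sigma x))).
Proof. by []. Qed.

Lemma nxt_rev z : cr (alpha z) -> nx (alpha (nx z)) = alpha z.
Proof.
move=> c; rewrite /nxt Hal.
have := iter_order Hsinj (alpha z); rewrite Hord //.
Qed.

Lemma card_ge4 d : cr d -> 4 <= #|D|.
Proof. by move=> c; rewrite -(Hord c) /order; apply: max_card. Qed.

Lemma crn_ok d : 4 <= #|D| -> cn d <= 3 -> ~~ cr (alpha (iter (cn d) nx d)).
Proof.
move=> h4 h3.
set s := iota 0 #|D|.+1.
set p := (fun k => ~~ cr (alpha (iter k nx d))).
have e : cn d = find p s by [].
have hs : has p s by rewrite has_find size_iota -e; lia.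
have := nth_find 0 hs; rewrite -e nth_iota //.
lia.
Qed.

Lemma cover x : inn x ->
  exists y, [/\ ~~ cr y, 2 <= cn y <= 3 & x \in edgeDarts alpha sigma cr y].
Proof.
move=> /andP[cx cax].
have h4 := card_ge4 cx.
have [k Pk kmin] := ex_minnP (Hend x).
set xs := fun j => iter j nx x.
have lt_cr j : j < k -> cr (alpha (xs j)).
  move=> jk; apply/negPn/negP => nj; have := kmin j nj; lia.
have k0 : 0 < k by case: k Pk {kmin lt_cr} => //=; rewrite cax.
have crxs j : j <= k -> cr (xs j).
  case: j => [|i] ik //=; rewrite /nxt !Hcr; exact: lt_cr.
have itk j : j <= k -> iter j nx (alpha (xs k)) = alpha (xs (k - j)).
  elim: j => [|j IH] jk; first by rewrite subn0.
  rewrite iterS IH; last lia.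
  rewrite (_ : k - j = (k - j.+1).+1); last lia.
  rewrite /xs iterS nxt_rev //; apply: lt_cr; lia.
set y := alpha (xs k).
have ny : ~~ cr y by [].
have kc : k < cn y.
  rewrite ltnNge; apply/negP => ck.
  have := crn_ok h4 (H3 ny).
  rewrite itk // Hal crxs //; lia.
exists y; split => //; first by have := H3 ny; lia.
rewrite inE; apply/existsP; exists (Ordinal (ltnW kc : k < (cn y).+1)) => /=.
by rewrite itk // subnn Hal eqxx orbT.
Qed.

Lemma edge_bound d : ~~ cr d ->
  #|[set z in edgeDarts alpha sigma cr d | inn z]| <= 2 * (cn d).-1.
Proof.
move=> nd.
set c := cn d.
set s := [seq iter k nx d | k <- iota 1 c.-1] ++ [seq alpha (iter k nx d) | k <- iota 1 c.-1].
have -> : 2 * c.-1 = size s by rewrite size_cat !size_map size_iota; lia.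
apply: leq_trans (card_size s); apply: subset_leq_card; apply/subsetP => z.
rewrite !inE => /andP[/existsP[[k kc]] /= zk /andP[cz caz]].
have ok := crn_ok (card_ge4 cz) (H3 nd).
have k1 : 1 <= k.
  case: k kc zk => // _ /= /orP[] /eqP ez; move: cz caz; rewrite ez ?Hal.
    by rewrite (negbTE nd).
  by move=> _; rewrite (negbTE nd).
have k2 : k != c.
  apply/eqP => ekc; move: zk ok; rewrite ekc -/c => /orP[] /eqP ez; rewrite -ez.
    by rewrite caz.
  by rewrite cz.
have kin : k \in iota 1 c.-1 by rewrite mem_iota; lia.
rewrite mem_cat; case/orP: zk => /eqP ->.
  by rewrite (map_f (fun k => iter k nx d) kin).
by rewrite (map_f (fun k => alpha (iter k nx d)) kin) orbT.
Qed.

Local Notation Es := (Eset alpha sigma cr).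

Lemma inner_bound : #|[set z | inn z]| <= 2 * #|Es 2| + 4 * #|Es 3|.
Proof.
have step : #|[set z | inn z]| <=
    \sum_(E | (E \in Es 2) || (E \in Es 3)) #|[set z in E | inn z]|.
  apply: union_bound => x; rewrite inE => ix.
  have [y [ny /andP[y2 y3] xy]] := cover ix.
  exists (edgeDarts alpha sigma cr y); last by rewrite inE xy.
  have : (cn y == 2) || (cn y == 3) by lia.
  case/orP => /eqP ey; apply/orP; [left|right]; apply/imsetP; exists y => //;
    by rewrite inE ny ey.
apply: (leq_trans step).
have bnd i E : E \in Es i -> #|[set z in E | inn z]| <= 2 * i.-1.
  case/imsetP => d; rewrite inE => /andP[nd /eqP ci] ->.
  by rewrite -ci edge_bound.
rewrite big_mkcond /=.
apply: (@leq_trans (\sum_E ((if E \in Es 2 then 2 else 0) + (if E \in Es 3 then 4 else 0)))).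
  apply: leq_sum => E _.
  case e2: (E \in Es 2); case e3: (E \in Es 3) => //=.
  - by have := bnd _ _ e2; lia.
  - by have := bnd _ _ e2; lia.
  - by have := bnd _ _ e3; lia.
rewrite big_split /= -!big_mkcond /= !sum_nat_const mulnC (mulnC _ 4). apply: eq_leq; congr (_ * _ + _ * _); exact: eq_card.
Qed.

Lemma face_part (T : {set D} -> bool) w :
  (forall e, T (fc e) -> w <= #|[set d in fc e | inn d]|) ->
  w * Ncells alpha sigma T <= #|[set d | inn d && T (fc d)]|.
Proof.
move=> Hw.
set FT := [set f in Faces alpha sigma | T f].
rewrite /Ncells -/FT mulnC -sum_nat_const.
pose A f := if f \in FT then [set d in f | inn d] else set0.
apply: (@leq_trans (\sum_f #|A f|)).
  rewrite big_mkcond; apply: leq_sum => f _; rewrite /A.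
  case: (boolP (f \in FT)) => // fF; rewrite inE in fF; move: fF => /andP[/imsetP[e _ ->] Te].
  exact: Hw.
apply: disj_sum.
  move=> f; rewrite /A; case: (boolP (f \in FT)) => [fF|_]; last exact: sub0set.
  rewrite inE in fF; move: fF => /andP[/imsetP[e _ ->] Te]; apply/subsetP => d.
  by rewrite !inE => /andP[de ->] /=; rewrite (face_sym (_ : d \in fc e)) // inE.
move=> f g x; rewrite /A.
case: (boolP (f \in FT)) => [fF|_]; last by rewrite inE.
rewrite inE in fF; case/andP: fF => /imsetP[e _ ->] _.
case: (boolP (g \in FT)) => [gF|_]; last by move=> _; rewrite inE.
rewrite inE in gF; case/andP: gF => /imsetP[e' _ ->] _.
rewrite !inE => /andP[xe _] /andP[xe' _].
by rewrite -(face_sym (_ : x \in fc e)) ?inE // -(face_sym (_ : x \in fc e')) ?inE.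
Qed.

Lemma weight_ok (P : {set D} -> bool) w :
  (forall f, P f -> w + 2 * vcorners cr f <= #|f|) ->
  forall e, P (fc e) -> w <= #|[set d in fc e | inn d]|.
Proof. move=> H e /H; have := face_count e; lia. Qed.

Definition Rt (x y : D) := isA4 cr (fc (alpha x)) && (y == ph (ph (alpha x))).

Lemma isTrailE d p : isTrail alpha sigma cr (d :: p) =
  [&& ~~ isA4 cr (fc d), ~~ isA4 cr (fc (alpha (last d p))), all inn (d :: p) &
      path Rt d p].
Proof. by []. Qed.

Lemma det d p q : ~~ isA4 cr (fc (alpha (last d p))) -> path Rt d p ->
  ~~ isA4 cr (fc (alpha (last d q))) -> path Rt d q -> p = q.
Proof.
elim: p d q => [|y p IH] d [|z q] //=.
- by move=> n _ _ /andP[/andP[a _] _]; rewrite a in n.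
- by move=> _ /andP[/andP[a _] _] n; rewrite a in n.
move=> n1 /andP[/andP[_ /eqP ey] p1] n2 /andP[/andP[_ /eqP ez] p2].
by subst y z; rewrite (IH _ _ n1 p1 n2 p2).
Qed.

Definition revs (s : seq D) := rev (map alpha s).

Lemma revsK s : revs (revs s) = s.
Proof.
rewrite /revs map_rev revK -map_comp.
by rewrite (eq_map (_ : alpha \o alpha =1 id)) ?map_id // => x /=; rewrite Hal.
Qed.

Lemma ph4 x : isA4 cr (fc x) -> ph (ph (ph (ph x))) = x.
Proof.
case/andP => /eqP c4 _.
have o : order ph x = 4.
  by rewrite -c4 /order; apply: eq_card => y; rewrite [in RHS]inE.
by have := iter_order ph_inj x; rewrite o.
Qed.

Lemma R_rev x y : Rt x y -> Rt (alpha y) (alpha x).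
Proof.
case/andP => a /eqP ->; rewrite /Rt Hal.
have m : ph (ph (alpha x)) \in fc (alpha x) by do 2 apply: face_ph; apply: mem_face.
by rewrite (face_sym m) a ph4 ?eqxx.
Qed.

Lemma revs_cons d p :
  revs (d :: p) = alpha (last d p) :: map alpha (rev (belast d p)).
Proof. by rewrite /revs (lastI d p) map_rcons rev_rcons (map_rev alpha). Qed.

Lemma last_rev_belast (d : D) p : last (last d p) (rev (belast d p)) = d.
Proof. by case: p => [|y p] //=; rewrite rev_cons last_rcons. Qed.

Lemma inn_alpha x : inn (alpha x) = inn x.
Proof. by rewrite /inner Hal andbC. Qed.

Lemma trail_rev s : isTrail alpha sigma cr s -> isTrail alpha sigma cr (revs s).
Proof.
case: s => [|d p] //.
move=> T; have := T; rewrite isTrailE => /and4P[n1 n2 ai pa].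
have ai' : all inn (revs (d :: p)).
  by rewrite /revs all_rev all_map; apply: sub_all ai => x /=; rewrite inn_alpha.
move: ai'; rewrite revs_cons isTrailE => ai'.
rewrite n2 ai' last_map last_rev_belast Hal n1 /=.
rewrite path_map rev_path.
by apply: sub_path pa => x y /= /R_rev.
Qed.

Lemma tstart_revs d p : tstart alpha sigma (revs (d :: p)) = tend alpha sigma (d :: p).
Proof. by rewrite revs_cons. Qed.

Lemma tend_revs d p : tend alpha sigma (revs (d :: p)) = tstart alpha sigma (d :: p).
Proof. by rewrite revs_cons /= last_map last_rev_belast Hal. Qed.

Definition can (s : seq D) := if isL cr (tstart alpha sigma s) then s else revs s.

Lemma can_props (X : {set D} -> bool) s :
  (forall f, X f -> ~~ isL cr f) -> isTrail alpha sigma cr s ->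
  (X (tstart alpha sigma s) && isL cr (tend alpha sigma s))
    || (isL cr (tstart alpha sigma s) && X (tend alpha sigma s)) ->
  [/\ isTrail alpha sigma cr (can s), isL cr (tstart alpha sigma (can s)),
      X (tend alpha sigma (can s)), size (can s) = size s &
      s = can s \/ s = revs (can s)].
Proof.
move=> XL; case: s => [|d p] // T.
rewrite /can; case: ifP => Ls.
  case/orP => /andP[a b]; last by split => //; left.
  by have := XL _ a; rewrite Ls.
case/orP => /andP[a b]; last by rewrite a in Ls.
split; rewrite ?tstart_revs ?tend_revs ?revsK //; last by right.
  exact: trail_rev.
by rewrite /revs size_rev size_map.
Qed.

Lemma head_det u u' : isTrail alpha sigma cr u -> isTrail alpha sigma cr u' ->
  ohead u = ohead u' -> u = u'.
Proof.
case: u => [|d p] //; case: u' => [|d' q] // T T' [e]; subst d'.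
move: T T'; rewrite !isTrailE => /and4P[_ n1 _ p1] /and4P[_ n2 _ p2].
by rewrite (det n1 p1 n2 p2).
Qed.

Definition Xs (i : 'I_4) := nth (isA5 cr) [:: isB4 cr; isB5 cr; isA3 cr; isA5 cr] i.
Definition Ts (i : 'I_6) :=
  nth (isL cr) [:: isA3 cr; isB4 cr; isA4 cr; isB5 cr; isA5 cr; isL cr] i.

Lemma Ts_inj i j f : Ts i f -> Ts j f -> i = j.
Proof.
move=> Hi Hj; apply: val_inj; move: Hi Hj.
case: i => [[|[|[|[|[|[|i]]]]]] Pi] //=; case: j => [[|[|[|[|[|[|j]]]]]] Pj] //=;
rewrite /Ts /Xs /= /isA3 /isB4 /isA4 /isB5 /isA5 /isL /fsize; lia.
Qed.

Lemma Xs_inj i j f : Xs i f -> Xs j f -> i = j.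
Proof.
move=> Hi Hj; apply: val_inj; move: Hi Hj.
case: i => [[|[|[|[|i]]]] Pi] //=; case: j => [[|[|[|[|j]]]] Pj] //=;
rewrite /Ts /Xs /= /isA3 /isB4 /isA4 /isB5 /isA5 /isL /fsize; lia.
Qed.

Lemma Xs_notL i f : Xs i f -> ~~ isL cr f.
Proof.
case: i => [[|[|[|[|i]]]] Pi] //=; rewrite /Ts /Xs /= /isA3 /isB4 /isA4 /isB5 /isA5 /isL /fsize; lia.
Qed.

Definition Spred (X : {set D} -> bool) n :=
  [pred t : n.-tuple D | isTrail alpha sigma cr t &&
    ((X (tstart alpha sigma t) && isL cr (tend alpha sigma t))
     || (isL cr (tstart alpha sigma t) && X (tend alpha sigma t)))].

Definition At (p : 'I_4 * 'I_(#|D|.+1)) : {set option D} :=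
  [set ohead (can t) | t : (nat_of_ord p.2).-tuple D in Spred (Xs p.1) p.2].

Lemma tau_le i :
  tau alpha sigma cr (Xs i) (isL cr) <= \sum_(n < #|D|.+1) #|At (i, n)|.
Proof.
rewrite /tau; apply: leq_sum => n _; apply: card_imset_le_imset => t t'.
rewrite !inE => /andP[T C] /andP[T' C'] e.
have [T1 L1 X1 S1 E1] := can_props (@Xs_notL i) T C.
have [T2 L2 X2 S2 E2] := can_props (@Xs_notL i) T' C'.
have ec := head_det T1 T2 e.
have vt : forall u : n.-tuple D, val (trev alpha u) = revs u by [].
have tt : forall u : n.-tuple D, trev alpha (trev alpha u) = u.
  by move=> u; apply: val_inj; rewrite vt vt revsK.
have [->|->] : t = t' \/ t = trev alpha t'.
  case: E1 => E1; case: E2 => E2.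
  - by left; apply: val_inj => /=; rewrite E1 E2 ec.
  - by right; apply: val_inj => /=; rewrite [X in _ = X]vt E1 E2 ec revsK.
  - by right; apply: val_inj => /=; rewrite [X in _ = X]vt E1 E2 ec.
  - by left; apply: val_inj => /=; rewrite E1 E2 ec.
  by [].
by rewrite tt setUC.
Qed.

Lemma taus_le :
  \sum_(i < 4) tau alpha sigma cr (Xs i) (isL cr) <= #|[set d | inn d && isL cr (fc d)]|.
Proof.
apply: (@leq_trans (\sum_(i < 4) \sum_(n < #|D|.+1) #|At (i, n)|)).
  by apply: leq_sum => i _; apply: tau_le.
rewrite pair_bigA /=.
apply: (@leq_trans #|Some @: [set d | inn d && isL cr (fc d)]|); last first.
  by rewrite card_imset //; exact: Some_inj.
apply: (@disj_sum _ _ (fun p => At (p.1, p.2))).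
  case=> i n; apply/subsetP => o /imsetP[t]; rewrite inE => /andP[T C] ->.
  have [T1 L1 X1 S1 E1] := can_props (@Xs_notL i) T C.
  move: T1 L1; case: (can t) => [|d q] // T1 L1.
  apply: imset_f; rewrite inE.
  move: T1; rewrite isTrailE => /and4P[_ _ /andP[-> _] _] /=.
  exact: L1.
case=> i n [j m] o /imsetP[t]; rewrite inE => /andP[T C] ->.
case/imsetP => t'; rewrite inE => /andP[T' C'] e.
have [T1 L1 X1 S1 E1] := can_props (@Xs_notL i) T C.
have [T2 L2 X2 S2 E2] := can_props (@Xs_notL j) T' C'.
have ec := head_det T1 T2 e.
have ij : i = j by apply: Xs_inj X1 _; rewrite ec.
have nm : n = m.
  apply: val_inj; rewrite /= -(size_tuple t) -(size_tuple t') -S1 -S2 ec //.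
by rewrite ij nm.
Qed.

Local Notation Z T := [set d | inn d && T (fc d)].

Lemma types_le :
  #|Z (isA3 cr)| + #|Z (isB4 cr)| + #|Z (isA4 cr)| + #|Z (isB5 cr)| + #|Z (isA5 cr)|
   + #|Z (isL cr)| <= #|[set d | inn d]|.
Proof.
have := @disj_sum _ _ (fun i => Z (Ts i)) [set d | inn d].
rewrite !big_ord_recr big_ord0 /=; apply.
  by move=> i; apply/subsetP => x; rewrite !inE => /andP[-> _].
by move=> i j x; rewrite !inE => /andP[_ a] /andP[_ b]; apply: Ts_inj a b.
Qed.

End Main.

Theorem mainTheorem6 (D : finType) (alpha sigma : D -> D) (cr : pred D) :
  is_conn_3plane_drawing alpha sigma cr ->
  3 * Ncells alpha sigma (isA3 cr) + Ncells alpha sigma (isB4 cr)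
    + 4 * Ncells alpha sigma (isA4 cr)
    + 2 * Ncells alpha sigma (isB5 cr) + 5 * Ncells alpha sigma (isA5 cr)
    + tau alpha sigma cr (isB4 cr) (isL cr) + tau alpha sigma cr (isB5 cr) (isL cr)
    + tau alpha sigma cr (isA3 cr) (isL cr) + tau alpha sigma cr (isA5 cr) (isL cr)
  <= 2 * #|Eset alpha sigma cr 2| + 4 * #|Eset alpha sigma cr 3|.
Proof.
case=> Hal1 [Hsinj [Hcr [Hord [_ [_ [Hend [H3 _]]]]]]].
have Hal d : alpha (alpha d) = d by case: (Hal1 d).
have wA3 := @face_part D alpha sigma cr Hal Hsinj _ 3
  (@weight_ok D alpha sigma cr Hal Hsinj Hcr (isA3 cr) 3
     (fun f => fun h => ltac:(move: h => /andP[/eqP -> /eqP ->]; done))).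
have wB4 := @face_part D alpha sigma cr Hal Hsinj _ 1
  (@weight_ok D alpha sigma cr Hal Hsinj Hcr (isB4 cr) 1
     (fun f => fun h => ltac:(move: h => /andP[/eqP -> /eqP ->]; done))).
have wA4 := @face_part D alpha sigma cr Hal Hsinj _ 4
  (@weight_ok D alpha sigma cr Hal Hsinj Hcr (isA4 cr) 4
     (fun f => fun h => ltac:(move: h => /andP[/eqP -> /eqP ->]; done))).
have wB5 := @face_part D alpha sigma cr Hal Hsinj _ 2
  (@weight_ok D alpha sigma cr Hal Hsinj Hcr (isB5 cr) 2
     (fun f => fun h => ltac:(move: h => /andP[/eqP -> /eqP ->]; done))).
have wA5 := @face_part D alpha sigma cr Hal Hsinj _ 5
  (@weight_ok D alpha sigma cr Hal Hsinj Hcr (isA5 cr) 5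
     (fun f => fun h => ltac:(move: h => /andP[/eqP -> /eqP ->]; done))).
have ht := @taus_le D alpha sigma cr Hal Hsinj.
rewrite !big_ord_recr big_ord0 /= /Xs /= in ht.
have ty := types_le alpha sigma cr.
have ib := @inner_bound D alpha sigma cr Hal Hsinj Hcr Hord Hend H3.
rewrite mul1n in wB4.
lia.
Qed.
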